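(* Let $n\geq1$, let $H_n$ be the disconnected anti-regular graph with loops on $n$ vertices and $G_{n-1}$ the connected anti-regular graph with loops on $n-1$ vertices. Then the multiset of eigenvalues of $A(H_n)$ is $\{0\}\cup\sigma(n-1)$, where $\sigma(m)$ is the multiset of eigenvalues of $A(G_m)$ and $\sigma(0)=\emptyset$. In particular the eigenvalues of $A(H_n)$ are $0$ together with $\frac{(-1)^{n}}{2\cos\left(\frac{2j-1}{2n-1}\pi\right)}$, $j=1,\ldots,n-1$.
   Context: A graph with loops is a pair $(V,E)$ with $E$ a set of 2-element multisets of $V$ (loops allowed, at most one per vertex, no multiple edges); the degree of a vertex counts a loop once. An anti-regular graph with loops is one in which all vertex degrees are distinct. For each $n\ge1$ there are exactly two up to isomorphism: the connected one $G_n$ with degree sequence $(1,\ldots,n)$ and the disconnected one $H_n$ with degree sequence $(0,\ldots,n-1)$; $H_n$ is the complement of $G_n$ (complement taken including loops). The adjacency matrix has diagonal entry $1$ exactly at vertices with a loop. *)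

(* Defs.v *)
From HB Require Import structures.
From mathcomp Require Import all_boot all_order all_algebra all_field.
Set Implicit Arguments. Unset Strict Implicit. Unset Printing Implicit Defensive.
Import Order.TTheory GRing.Theory Num.Theory.

(* A graph with loops on the vertex set 'I_n is a symmetric relation
   e : rel 'I_n; e i i holds iff there is a loop at i (at most one loop,
   no multiple edges automatically). *)

(* degree of a vertex: number of neighbours j (a loop j = i counted once) *)
Definition deg (n : nat) (e : rel 'I_n) (i : 'I_n) : nat := #|[set j | e i j]|.

Definition anti_regular (n : nat) (e : rel 'I_n) : Prop := injective (deg e).

(* H_n : the anti-regular graph with loops with degree sequence (0,...,n-1)
   (given distinct degrees on n vertices, this is: every degree is < n). *)
Definition is_H (n : nat) (e : rel 'I_n) : Prop :=
  [/\ symmetric e, anti_regular e & forall i, deg e i < n].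

(* G_n : the anti-regular graph with loops with degree sequence (1,...,n)
   (given distinct degrees on n vertices, each <= n: every degree is > 0). *)
Definition is_G (n : nat) (e : rel 'I_n) : Prop :=
  [/\ symmetric e, anti_regular e & forall i, 0 < deg e i].

Definition adjmx (n : nat) (e : rel 'I_n) : 'M[algC]_n :=
  \matrix_(i, j) ((e i j)%:R)%R.

(* Main.v *)
Require Import Defs.
From HB Require Import structures.
From mathcomp Require Import all_boot all_order all_algebra all_field.
From mathcomp Require Import zify ring lra.
Import Order.TTheory GRing.Theory Num.Theory.
Set Implicit Arguments. Unset Strict Implicit. Unset Printing Implicit Defensive.
Set Implicit Arguments. Unset Strict Implicit. Unset Printing Implicit Defensive.

Definition dg (T : finType) (e : rel T) (x : T) : nat := #|[set y | e x y]|.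

Lemma card_sub1 (T : finType) (b : T) (P : pred T) :
  #|[set y | P y]| = (P b + #|[set y : {x : T | x != b} | P (val y)]|)%N.
Proof.
rewrite (cardsD1 b) inE; congr (_ + _)%N.
rewrite -(card_imset _ val_inj); apply: eq_card => y; rewrite !inE.
apply/andP/imsetP.
- case=> yb Py; exists (exist _ y yb) => //; by rewrite inE.
- by case=> z; rewrite inE => Pz ->; split => //; exact: (valP z).
Qed.

Lemma card_sig1 (T : finType) (b : T) : #|{: {x : T | x != b}}| = #|T|.-1.
Proof. by rewrite card_sig -(cardC1 b); apply: eq_card. Qed.

Lemma dg_le (T : finType) (e : rel T) x : (dg e x <= #|T|)%N.
Proof. exact: max_card. Qed.

Lemma onto_ex (T : finType) (N : nat) (f : T -> 'I_N) (k : 'I_N) :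
  injective f -> #|T| = N -> exists x, f x = k.
Proof.
move=> fi hT.
have : k \in codom f by apply: inj_card_onto => //; rewrite card_ord hT.
by case/codomP => x ->; exists x.
Qed.

Lemma comb (N : nat) : forall (T : finType) (e : rel T), #|T| = N -> symmetric e ->
  injective (dg e) ->
  ((forall x, dg e x < N)%N -> forall x y, e x y = (N <= dg e x + dg e y)%N) /\
  ((forall x, 0 < dg e x)%N -> forall x y, e x y = (N.+1 <= dg e x + dg e y)%N).
Proof.
elim: N => [|N IH] T e hT se ie.
  have F : forall x : T, False.
    by move=> x; move: (max_card (pred1 x)); rewrite card1 hT.
  by split => _ x; case: (F x).
split.
- move=> hd.
  have [b hb] := @onto_ex T N.+1 (fun x => Ordinal (hd x)) ord0
     (fun x y h => ie x y (congr1 val h)) hT.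
  have db : dg e b = 0%N by move: (congr1 val hb).
  have eb : forall y, e b y = false.
    move=> y; have := cards0_eq db => /setP /(_ y); by rewrite !inE.
  pose T' := {x : T | x != b}.
  pose e' := fun x y : T' => e (val x) (val y).
  have dg' : forall x : T', dg e' x = dg e (val x).
    by move=> x; rewrite /dg (card_sub1 b) se eb.
  have c' : #|{: T'}| = N by rewrite card_sig1 hT.
  have s' : symmetric e' by move=> x y; exact: se.
  have i' : injective (dg e').
    by move=> x y; rewrite !dg' => /ie /val_inj.
  have [_ IH2] := IH T' e' c' s' i'.
  have /IH2 {}IH2 : forall x, (0 < dg e' x)%N.
    move=> x; rewrite dg' lt0n; apply: contra (valP x) => /eqP h.
    by apply/eqP/ie; rewrite h db.
  move=> x y.
  have [-> | xb] := eqVneq x b.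
    by rewrite eb db add0n; apply/esym/negbTE; rewrite -ltnNge.
  have [-> | yb] := eqVneq y b.
    by rewrite se eb db addn0; apply/esym/negbTE; rewrite -ltnNge.
  by have := IH2 (exist _ x xb) (exist _ y yb); rewrite !dg'.
- move=> hp.
  have hd : forall x, ((dg e x).-1 < N.+1)%N.
    move=> x; have := dg_le e x; rewrite hT; have := hp x; lia.
  have [t ht] := @onto_ex T N.+1 (fun x => Ordinal (hd x)) ord_max
     (fun x y h => ie x y (etrans (etrans (esym (prednK (hp x))) (congr1 (fun k => k.+1) (congr1 val h))) (prednK (hp y)))) hT.
  have dt : dg e t = N.+1 by move: (congr1 val ht) => /= h; have := hp t; lia.
  have et : forall y, e t y.
    move=> y; have := cardsC [set y | e t y]; rewrite hT -/(dg e t) dt.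
    move=> h; have /cards0_eq /setP /(_ y) : #|~: [set y | e t y]| = 0%N by lia.
    by rewrite !inE => /negbFE.
  pose T' := {x : T | x != t}.
  pose e' := fun x y : T' => e (val x) (val y).
  have dg' : forall x : T', dg e (val x) = (dg e' x).+1.
    by move=> x; rewrite /dg (card_sub1 t) se et.
  have c' : #|{: T'}| = N by rewrite card_sig1 hT.
  have s' : symmetric e' by move=> x y; exact: se.
  have i' : injective (dg e').
    by move=> x y h; apply/val_inj/ie; rewrite !dg' h.
  have [IH1 _] := IH T' e' c' s' i'.
  have /IH1 {}IH1 : forall x, (dg e' x < N)%N.
    move=> x; have := dg_le e (val x); rewrite hT dg'.
    have : dg e (val x) != dg e t by apply: contra (valP x) => /eqP /ie ->.
    by rewrite dt dg'; lia.
  move=> x y.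
  have [-> | xt] := eqVneq x t.
    by rewrite et dt; have := hp y; lia.
  have [-> | yt] := eqVneq y t.
    by rewrite se et dt; have := hp x; lia.
  have h := IH1 (exist _ x xt) (exist _ y yt).
  change (e x y) with (e' (exist _ x xt) (exist _ y yt)); rewrite h.
  have h1 := dg' (exist _ x xt); have h2 := dg' (exist _ y yt).
  simpl in h1, h2; by rewrite h1 h2 addSn addnS !ltnS.
Qed.
Local Open Scope ring_scope.

Lemma unit_conj (p : algC) : `|p| = 1 -> p^* = p^-1.
Proof.
move=> h; have pnz : p != 0 by rewrite -normr_eq0 h oner_eq0.
by apply: (mulfI pnz); rewrite mulfV // -normCK h expr1n.
Qed.

Lemma unit_Re2 (p : algC) : `|p| = 1 -> 2 * 'Re p = p + p^-1.
Proof. by move=> h; rewrite ReE unit_conj // mulrC divfK // pnatr_eq0. Qed.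

Lemma unit_nz (p : algC) : `|p| = 1 -> p != 0.
Proof. by move=> h; rewrite -normr_eq0 h oner_eq0. Qed.

Lemma unit_pos (y : algC) : `|y| = 1 -> y != 1 -> 0 < 2 - 2 * 'Re y.
Proof.
move=> h y1.
have -> : 2 - 2 * 'Re y = `|1 - y| ^+ 2.
  have e1 : (1 - y)^* = 1 - y^-1 by rewrite -unit_conj // rmorphB rmorph1.
  rewrite normCK e1 unit_Re2 //.
  have ynz := unit_nz h.
  by field.
by rewrite exprn_gt0 // normr_gt0 subr_eq0 eq_sym.
Qed.

Lemma unit_frac (p : algC) : `|p| = 1 -> p != 1 -> p / (1 - p) ^+ 2 = - (2 - 2 * 'Re p)^-1.
Proof.
move=> h p1; have pnz := unit_nz h.
have q : 1 - p != 0 by rewrite subr_eq0 eq_sym.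
rewrite unit_Re2 //.
have -> : 2 - (p + p^-1) = - ((1 - p)^+2 / p) by field.
by rewrite invrN opprK invf_div.
Qed.

Section Roots.
Variables (r : nat) (eta p0 y : algC).
Hypotheses (hr : (0 < r)%N) (heta : r.-primitive_root eta) (hp0 : p0 ^+ r = y) (hy1 : y != 1).
Let p (i : nat) := p0 * eta ^+ i.

Lemma geo e : \sum_(i < r) eta ^+ (i * e) = if (r %| e)%N then r%:R else 0.
Proof.
have E : forall i, eta ^+ (i * e) = (eta ^+ e) ^+ i by move=> i; rewrite mulnC exprM.
under eq_bigr => i _ do rewrite E.
case: ifP => hd.
  have h1 : eta ^+ e = 1 by apply/eqP; rewrite -(prim_order_dvd heta).
  by rewrite h1; under eq_bigr => i _ do rewrite expr1n; rewrite sumr_const card_ord.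
have h1 : eta ^+ e - 1 != 0 by rewrite subr_eq0 -(prim_order_dvd heta) hd.
apply: (mulfI h1); rewrite mulr0 -subrX1 -exprM mulnC exprM (prim_expr_order heta).
by rewrite expr1n subrr.
Qed.

Lemma pow_sum e : \sum_(i < r) p i ^+ e = p0 ^+ e * (if (r %| e)%N then r%:R else 0).
Proof. by rewrite -geo mulr_sumr; apply: eq_bigr => i _; rewrite /p exprMn -exprM mulnC. Qed.

Lemma p_r i : p i ^+ r = y.
Proof. by rewrite /p exprMn -exprM mulnC exprM (prim_expr_order heta) expr1n mulr1. Qed.

Lemma p_ne1 i : p i != 1.
Proof. by apply: contra hy1 => /eqP h; rewrite -(p_r i) h expr1n. Qed.

Lemma key_sum : \sum_(i < r) p i / (1 - p i) ^+ 2 = (r%:R) ^+ 2 * y / (1 - y) ^+ 2.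
Proof.
have y1 : 1 - y != 0 by rewrite subr_eq0 eq_sym.
have Q : forall i : 'I_r, p i / (1 - p i) ^+ 2 =
    (p i * (\sum_(k < r) p i ^+ k) ^+ 2) / (1 - y) ^+ 2.
  move=> i.
  have hs : 1 - y = (1 - p i) * \sum_(k < r) p i ^+ k.
    by rewrite -(p_r i) -opprB subrX1 -mulNr opprB.
  have q : 1 - p i != 0 by rewrite subr_eq0 eq_sym p_ne1.
  have s0 : \sum_(k < r) p i ^+ k != 0 by apply: contraNneq y1 => h; rewrite hs h mulr0.
  rewrite hs; field.
  by rewrite s0 q.
under eq_bigr => i _ do rewrite Q.
rewrite -mulr_suml; congr (_ / _).
have step : forall i : 'I_r, p i * (\sum_(k < r) p i ^+ k) ^+ 2 =
    \sum_(k < r) \sum_(l < r) p i ^+ (k + l + 1).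
  move=> i; rewrite expr2 big_distrlr mulr_sumr; apply: eq_bigr => k _.
  rewrite mulr_sumr; apply: eq_bigr => l _.
  by rewrite !exprD expr1 [LHS]mulrC.
under eq_bigr => i _ do rewrite step.
rewrite exchange_big /=.
under eq_bigr => k _ do rewrite exchange_big /=.
under eq_bigr => k _ do under eq_bigr => l _ do rewrite pow_sum.
have inner : forall k : 'I_r, \sum_(l < r) p0 ^+ (k + l + 1) *
    (if (r %| k + l + 1)%N then r%:R else 0) = r%:R * y.
  move=> k; have hk := ltn_ord k.
  have hl : (r - k.+1 < r)%N by lia.
  rewrite (bigD1 (Ordinal hl)) //= big1 ?addr0.
    have -> : (k + (r - k.+1) + 1 = r)%N by lia.
    by rewrite dvdnn hp0 mulrC.
  move=> l hl'.
  have hv : (nat_of_ord l != r - k.+1)%N.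
    by apply: contra hl' => /eqP h; apply/eqP/val_inj.
  have nd : ~~ (r %| k + l + 1)%N.
    have hl2 := ltn_ord l.
    by apply/negP => /dvdnP [[|[|c]] H]; lia.
  by rewrite (negbTE nd) mulr0.
rewrite (eq_bigr _ (fun k _ => inner k)) sumr_const card_ord.
by rewrite -mulr_natl; ring.
Qed.

End Roots.

Lemma better_root (r : nat) (y : algC) : (1 < r)%N -> `|y| = 1 -> y != 1 ->
  exists p, p ^+ r = y /\ 'Re y < 'Re p.
Proof.
move=> hr hy y1; have hr0 : (0 < r)%N by lia.
have [eta heta] := C_prim_root_exists hr0.
pose p0 := r.-root y; have hp0 : p0 ^+ r = y := rootCK hr0 y.
pose p i := p0 * eta ^+ i.
case: (pickP [pred i : 'I_r | 'Re y < 'Re (p i)]) => [i Hi | H].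
  by exists (p i); split => //; exact: (p_r heta hp0).
exfalso.
have up : forall i, `|p i| = 1.
  move=> i; apply/eqP; rewrite -(pexpr_eq1 hr0) ?normr_ge0 //.
  by rewrite -normrX (p_r heta hp0) hy.
have pn1 : forall i, p i != 1 := p_ne1 heta hp0 y1.
have Hle : forall i : 'I_r, 'Re (p i) <= 'Re y.
  by move=> i; rewrite real_leNgt ?Creal_Re //; have := H i => /= ->.
pose b := 2 - 2 * 'Re y.
have hb : 0 < b := unit_pos hy y1.
have ha : forall i : 'I_r, b <= 2 - 2 * 'Re (p i).
  by move=> i; rewrite lerD2l lerN2 ler_pM2l ?ltr0n ?Hle.
have ha0 : forall i : 'I_r, 0 < 2 - 2 * 'Re (p i).
  by move=> i; exact: lt_le_trans hb (ha i).
have K := key_sum hr0 heta hp0 y1.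
rewrite (eq_bigr _ (fun (i : 'I_r) _ => unit_frac (up i) (pn1 i))) in K.
rewrite -mulrA (unit_frac hy y1) sumrN mulrN in K.
move/oppr_inj in K.
have L : \sum_(i < r) (2 - 2 * 'Re (p i))^-1 <= \sum_(i < r) b^-1.
  by apply: ler_sum => i _; rewrite lef_pV2 ?posrE ?ha.
rewrite K sumr_const card_ord -/b -[b^-1 *+ r]mulr_natl in L.
rewrite ler_pM2r ?invr_gt0 // -natrX ler_nat in L.
by have : (r ^ 2 <= r)%N := L; case: r hr {K L H ha ha0 p up pn1 Hle heta hp0 hr0 p0 eta} => [|[|r]] //; rewrite expnS; nia.
Qed.

Lemma m1_ne1 : (-1 : algC) != 1.
Proof. by rewrite eq_sym -addr_eq0 (_ : 1 + 1 = 2%:R) // pnatr_eq0. Qed.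

Lemma rootN1_prim (N : nat) : (0 < N)%N -> (2 * N).-primitive_root (N.-root (-1 : algC)).
Proof.
move=> hN; set w := N.-root (-1 : algC).
have wN : w ^+ N = -1 := rootCK hN (-1).
have w2N : w ^+ (2 * N) = 1 by rewrite mulnC exprM wN sqrrN expr1n.
have h2N : (0 < 2 * N)%N by lia.
have [d hd dd] := prim_order_exists h2N w2N.
have [<-|dne] := eqVneq d (2 * N)%N; first done.
exfalso.
have hd0 := prim_order_gt0 hd.
have ndN : ~~ (d %| N)%N by rewrite (prim_order_dvd hd) wN m1_ne1.
pose r := ((2 * N) %/ d)%N.
have hdr : (d * r = 2 * N)%N by rewrite mulnC divnK.
have rodd : odd r.
  apply/negPn/negP => hev; apply: (negP ndN); apply/dvdnP; exists r./2.
  have := odd_double_half r; rewrite (negbTE hev) add0n -muln2 => hr2.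
  nia.
have dev : ~~ odd d.
  by have := congr1 odd hdr; rewrite !oddM rodd andbT /= => ->.
pose e := d./2.
have hde : (d = 2 * e)%N.
  by have := odd_double_half d; rewrite (negbTE dev) add0n -muln2 /e; lia.
have hNe : (N = r * e)%N by nia.
have we : w ^+ e = -1.
  have : (w ^+ e) ^+ 2 == 1 by rewrite -exprM mulnC -hde (prim_expr_order hd).
  rewrite sqrf_eq1 => /orP [h|/eqP //].
  rewrite -(prim_order_dvd hd) in h.
  by have := dvdn_leq (_ : (0 < e)%N) h; lia.
have hy : `|w| = 1.
  apply/eqP; rewrite -(pexpr_eq1 hN) ?normr_ge0 //.
  by rewrite -normrX wN normrN normr1.
have w1 : w != 1.
  by apply/eqP => h; move: wN; rewrite h expr1n => /eqP; rewrite eq_sym (negbTE m1_ne1).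
have r1 : (1 < r)%N.
  by move: hdr dne; case: (r) => [|[|r']]; lia.
have [p [hp hlt]] := better_root r1 hy w1.
have pN : p ^+ N = -1 by rewrite hNe exprM hp we.
pose q := if 0 <= 'Im p then p else p^*.
have qN : q ^+ N = -1.
  rewrite /q; case: ifP => _ //.
  by rewrite -rmorphXn pN rmorphN1.
have qI : 0 <= 'Im q.
  rewrite /q; case: ifP => // h; rewrite Im_conj oppr_ge0; apply: ltW.
  by rewrite real_ltNge ?Creal_Im ?h.
have qR : 'Re q = 'Re p by rewrite /q; case: ifP => // _; rewrite Re_conj.
have := rootC_Re_max hN qN qI; rewrite qR -/w.
by rewrite real_leNgt ?Creal_Re // hlt.
Qed.
Local Open Scope ring_scope.

Section Eig.
Variables (m : nat) (z : algC).
Hypotheses (hz : z ^+ (2 * m).+1 = -1) (hz4 : z ^+ 4 != 1).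

Definition uu (k : nat) := (-1) ^+ k * (z ^+ (2 * k) - (z ^+ (2 * k))^-1).
Definition ss := z + z^-1.
Definition cc := (-1) ^+ m.+1 / ss.

Lemma z_nz : z != 0.
Proof. by apply/eqP => h; move: hz; rewrite h expr0n /= => /eqP; rewrite eq_sym oppr_eq0 oner_eq0. Qed.

Lemma ss_nz : ss != 0.
Proof.
apply: contra hz4 => /eqP h.
have h2 : z ^+ 2 = -1.
  have : z * ss = 0 by rewrite h mulr0.
  rewrite /ss mulrDr mulfV ?z_nz // -expr2 => /eqP; rewrite addr_eq0 => /eqP //.
by rewrite (_ : 4 = 2 * 2)%N // exprM h2 sqrrN expr1n.
Qed.

Lemma u0 : uu 0 = 0.
Proof. by rewrite /uu !expr0 invr1 subrr mulr0. Qed.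

Lemma u1_nz : uu 1 != 0.
Proof.
rewrite /uu expr1 muln1 mulN1r oppr_eq0 subr_eq0.
apply: contra hz4 => /eqP h.
have znz := z_nz.
by rewrite (_ : 4 = 2 + 2)%N // exprD {1}h mulVf // expf_neq0.
Qed.

Lemma relu k : (k < m)%N -> uu (m - k) = cc * (uu k.+1 - uu k).
Proof.
move=> hk; have znz := z_nz; have snz := ss_nz.
rewrite /uu /cc.
rewrite (_ : (-1) ^+ m.+1 = (-1) ^+ (m - k) * (-1) ^+ k.+1 :> algC); last first.
  by rewrite -exprD; congr (_ ^+ _); lia.
set A := z ^+ (2 * k).
have Anz : A != 0 by rewrite expf_neq0.
have e1 : z ^+ (2 * (m - k)) = - (A * z)^-1.
  have : z ^+ (2 * (m - k)) * (A * z) = -1.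
    by rewrite -exprSr -exprD -hz; congr (_ ^+ _); lia.
  by move=> h; apply: (mulIf (mulf_neq0 Anz znz)); rewrite h mulNr mulVf ?mulf_neq0.
have e2 : z ^+ (2 * k.+1) = A * z ^+ 2 by rewrite mulnS exprD mulrC.
rewrite e1 e2 !exprS.
move: snz; rewrite /ss => snz.
have zz : z * z + 1 != 0.
  by rewrite (_ : z * z + 1 = z * (z + z^-1)) ?mulf_neq0 // mulrDr mulfV.
have [t1|t1] : ((-1) ^+ k = 1 :> algC) \/ ((-1) ^+ k = -1 :> algC).
- by rewrite -signr_odd; case: (odd k); [right|left].
- rewrite t1; field; rewrite ?snz ?znz ?Anz ?zz //.
- rewrite t1; field; rewrite ?snz ?znz ?Anz ?zz //.
Qed.

Lemma core k : (k <= m)%N ->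
  \sum_(i < m.+1) uu i * ((m.+1 <= i + k)%N : nat)%:R = cc * uu k.
Proof.
elim: k => [|k IH] hk.
  rewrite u0 mulr0 big1 // => i _.
  by rewrite addn0 leqNgt ltn_ord /= mulr0.
have hk' : (m - k < m.+1)%N by lia.
have step : \sum_(i < m.+1) uu i * ((m.+1 <= i + k.+1)%N : nat)%:R =
    \sum_(i < m.+1) uu i * ((m.+1 <= i + k)%N : nat)%:R + uu (m - k).
  rewrite (bigD1 (Ordinal hk')) //= [X in _ = X + _](bigD1 (Ordinal hk')) //=.
  rewrite (_ : (m.+1 <= m - k + k.+1)%N = true); last by apply/idP; lia.
  rewrite (_ : (m.+1 <= m - k + k)%N = false); last by apply/negbTE; lia.
  rewrite mulr1 mulr0 add0r addrC; congr (_ + _).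
  apply: eq_bigr => i hi.
  have hv : (nat_of_ord i != m - k)%N.
    by apply: contra hi => /eqP h; apply/eqP/val_inj.
  rewrite (_ : (m.+1 <= i + k.+1)%N = (m.+1 <= i + k)%N) //.
  by apply/idP/idP; lia.
rewrite step IH ?(ltnW hk) // (relu (hk : (k < m)%N)).
by rewrite -mulrDr addrC subrK.
Qed.

End Eig.
Local Open Scope ring_scope.

Lemma sum_reidx (N : nat) (F : nat -> algC) (d : 'I_N -> nat)
  (hd : forall a, (d a < N)%N) (inj : injective d) :
  \sum_(a < N) F (d a) = \sum_(i < N) F i.
Proof.
pose h a := Ordinal (hd a).
have hi : injective h by move=> x y /(congr1 val) /inj.
by rewrite [RHS](reindex_inj hi).
Qed.

Lemma sgn_odd j : (-1) ^+ (2 * j).+1 = -1 :> algC.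
Proof. by rewrite exprS exprM sqrrN !expr1n mulr1. Qed.

Lemma inv_sum_eq (a b : algC) : a != 0 -> b != 0 -> a + a^-1 = b + b^-1 ->
  a = b \/ a * b = 1.
Proof.
move=> an bn h.
have : (a - b) * (1 - (a * b)^-1) = 0.
  have -> : (a - b) * (1 - (a * b)^-1) = (a + a^-1) - (b + b^-1).
    by field; rewrite an bn.
  by rewrite h subrr.
move/eqP; rewrite mulf_eq0 => /orP [].
  by rewrite subr_eq0 => /eqP; left.
rewrite subr_eq0 => /eqP h1; right.
by apply: (@invr_inj _ (a * b)); rewrite -h1 invr1.
Qed.

Lemma main_aux (m : nat) (eH : rel 'I_m.+1) (eG : rel 'I_m) :
  is_H eH -> is_G eG ->
  char_poly (adjmx eH) = 'X * char_poly (adjmx eG) /\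
  char_poly (adjmx eH) =
    'X * \prod_(j < m)
           ('X - ((-1) ^+ m.+1 / (2 * 'Re (((2 * m).+1).-root (-1) ^+ (2 * j).+1)))%:P).
Proof.
move=> [sH iH0 bH0] [sG iG0 pG0].
have pG : forall a, (0 < dg eG a)%N := pG0.
have bH : forall a, (dg eH a < m.+1)%N := bH0.
have iG : injective (dg eG) := iG0.
have iH : injective (dg eH) := iH0.
set w := ((2 * m).+1).-root (-1 : algC).
have wN : w ^+ (2 * m).+1 = -1 := rootCK (ltn0Sn _) (-1).
have wp : (2 * (2 * m).+1).-primitive_root w := rootN1_prim (ltn0Sn _).
have wu : `|w| = 1.
  apply/eqP; rewrite -(pexpr_eq1 (ltn0Sn (2 * m))) ?normr_ge0 //.
  by rewrite -normrX wN normrN normr1.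
pose zt (j : nat) := w ^+ (2 * j).+1.
pose c (j : 'I_m) := (-1) ^+ m.+1 / (2 * 'Re (zt j)).
have ztN : forall j, zt j ^+ (2 * m).+1 = -1.
  by move=> j; rewrite /zt -exprM mulnC exprM wN sgn_odd.
have zt4 : forall j : 'I_m, zt j ^+ 4 != 1.
  move=> j; rewrite /zt -exprM -(prim_order_dvd wp).
  have := ltn_ord j; move: (nat_of_ord j) => k hk.
  by apply/negP => /dvdnP [[|[|q]] H]; lia.
have ztu : forall j, `|zt j| = 1 by move=> j; rewrite /zt normrX wu expr1n.
have cE : forall j, c j = cc m (zt j) by move=> j; rewrite /c /cc /ss unit_Re2.
have cnz : forall j, c j != 0.
  move=> j; rewrite cE /cc mulf_neq0 ?invr_eq0 ?signr_eq0 //.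
  exact: (ss_nz (ztN j) (zt4 j)).
have cinj : injective c.
  move=> j k; rewrite !cE /cc => h.
  have hs : ss (zt j) = ss (zt k).
    apply: invr_inj; apply: (mulfI (_ : (-1) ^+ m.+1 != 0 :> algC)) => //.
    by rewrite signr_eq0.
  have hj := ltn_ord j; have hk := ltn_ord k.
  case: (inv_sum_eq (z_nz (ztN j)) (z_nz (ztN k)) hs) => [h1|h1].
    move/eqP: h1; rewrite /zt (eq_prim_root_expr wp) => hm; apply/val_inj => /=.
    by rewrite !modn_small in hm; lia.
  exfalso; move/eqP: h1; rewrite /zt -exprD -(prim_order_dvd wp).
  by move=> /dvdnP [[|[|q]] H]; lia.
have [_ GG] := comb (card_ord m) sG iG.
have GG' := GG pG.
have dGle : forall a, (dg eG a <= m)%N.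
  by move=> a; have := dg_le eG a; rewrite card_ord.
have hdG : forall a, ((dg eG a).-1 < m)%N.
  by move=> a; have := pG a; have := dGle a; lia.
have injG : injective (fun a => (dg eG a).-1).
  move=> x y /= h; apply: iG; have := pG x; have := pG y; lia.
have rootG : forall j, root (char_poly (adjmx eG)) (c j).
  move=> j; rewrite -eigenvalue_root_char; apply/eigenvalueP.
  exists (\row_a uu (zt j) (dg eG a)).
    apply/rowP => b; rewrite !mxE.
    under eq_bigr => a _ do rewrite !mxE GG'.
    pose F := fun i : nat => uu (zt j) i.+1 * ((m < i.+1 + dg eG b)%N : nat)%:R.
    transitivity (\sum_(a < m) F ((dg eG a).-1)).
      by apply: eq_bigr => a _; rewrite /F prednK ?pG.
    have E := sum_reidx F hdG injG; simpl in E; rewrite E /F.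
    rewrite cE -(core (ztN j) (zt4 j) (dGle b)) big_ord_recl /= u0 mul0r add0r.
    by apply: eq_bigr => i _; rewrite /bump leq0n add1n.
  have m0 : (0 < m)%N := leq_ltn_trans (leq0n j) (ltn_ord j).
  have hinj : injective (fun a => Ordinal (hdG a)) by move=> x y /(congr1 val) /injG.
  have [a ha] := onto_ex (Ordinal m0) hinj (card_ord m).
  have da : dg eG a = 1%N by move: (congr1 val ha) => /= h; have := pG a; lia.
  apply/eqP => /rowP /(_ a); rewrite !mxE da => h.
  by move: (u1_nz (ztN j) (zt4 j)); rewrite h eqxx.
have [HH _] := comb (card_ord m.+1) sH iH.
have HH' := HH bH.
have hinjH : injective (fun a => Ordinal (bH a) : 'I_m.+1).
  by move=> x y /(congr1 val) /iH.
have rootH0 : root (char_poly (adjmx eH)) 0.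
  rewrite -eigenvalue_root_char; apply/eigenvalueP.
  have [b0 hb0] := onto_ex ord0 hinjH (card_ord _).
  have d0 : dg eH b0 = 0%N by move: (congr1 val hb0).
  exists (\row_a ((a == b0)%:R : algC)).
    apply/rowP => b; rewrite !mxE mul0r.
    under eq_bigr => a _ do rewrite !mxE.
    rewrite (bigD1 b0) //= big1 ?addr0.
      rewrite eqxx HH' d0 add0n ltnNge.
      by have := bH b; rewrite ltnS => ->; rewrite mulr0.
    by move=> a /negbTE ->; rewrite mul0r.
  apply/eqP => /rowP /(_ b0); rewrite !mxE eqxx => /eqP.
  by rewrite oner_eq0.
have rootHc : forall j, root (char_poly (adjmx eH)) (c j).
  move=> j; rewrite -eigenvalue_root_char; apply/eigenvalueP.
  exists (\row_a uu (zt j) (dg eH a)).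
    apply/rowP => b; rewrite !mxE.
    under eq_bigr => a _ do rewrite !mxE HH'.
    pose F := fun i : nat => uu (zt j) i * ((m < i + dg eH b)%N : nat)%:R.
    have E := sum_reidx F bH iH; simpl in E; rewrite E /F.
    by rewrite cE -(core (ztN j) (zt4 j) (_ : (dg eH b <= m)%N)) // -ltnS bH.
  have m1 : (1 < m.+1)%N by have := ltn_ord j; lia.
  have [a ha] := onto_ex (Ordinal m1) hinjH (card_ord _).
  have da : dg eH a = 1%N by move: (congr1 val ha).
  apply/eqP => /rowP /(_ a); rewrite !mxE da => h.
  by move: (u1_nz (ztN j) (zt4 j)); rewrite h eqxx.
have PG : char_poly (adjmx eG) = \prod_(j < m) ('X - (c j)%:P).
  have sizeG : size (char_poly (adjmx eG)) = (size [seq c j | j <- enum 'I_m]).+1.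
    by rewrite size_char_poly size_map size_enum_ord.
  rewrite (all_roots_prod_XsubC sizeG).
  - by rewrite (monicP (char_poly_monic _)) scale1r big_map big_enum.
  - by apply/allP => x /mapP [j _ ->]; exact: rootG.
  - by rewrite uniq_rootsE map_inj_uniq ?enum_uniq.
have PH : char_poly (adjmx eH) = 'X * \prod_(j < m) ('X - (c j)%:P).
  have sizeH : size (char_poly (adjmx eH)) =
      (size (0 :: [seq c j | j <- enum 'I_m])).+1.
    by rewrite size_char_poly /= size_map size_enum_ord.
  rewrite (all_roots_prod_XsubC sizeH).
  - by rewrite (monicP (char_poly_monic _)) scale1r big_cons big_map big_enum polyC0 subr0.
  - by rewrite /= rootH0; apply/allP => x /mapP [j _ ->]; exact: rootHc.
  - rewrite uniq_rootsE /= map_inj_uniq ?enum_uniq // andbT.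
    by apply/mapP => [[j _ h]]; move: (cnz j); rewrite -h eqxx.
by split; rewrite PH ?PG.
Qed.

Theorem mainTheorem7 (n : nat) (hn : (1 <= n)%N)
    (eH : rel 'I_n) (eG : rel 'I_n.-1) :
  is_H eH -> is_G eG ->
  char_poly (adjmx eH) = 'X * char_poly (adjmx eG) /\
  char_poly (adjmx eH) =
    'X * \prod_(j < n.-1)
           ('X - ((-1) ^+ n / (2 * 'Re (((2 * n).-1).-root (-1) ^+ (2 * j).+1)))%:P).
Proof.
case: n hn eH eG => [//|m] _ eH eG.
have h : ((2 * m.+1).-1 = (2 * m).+1)%N by lia.
rewrite h; exact: main_aux.
Qed.
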